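(* Let $w\in S_n$ and $I\subseteq\mathrm{CInv}(w)$ nonempty. Choose $(w(i),w(j))\in I$ with $w(j)$ minimal, and let $w'$ be the permutation obtained by removing the covering inversion $(w(i),w(j))$ from $w$. Then $I\setminus\{(w(i),w(j))\}\subseteq\mathrm{CInv}(w')$.
   Context: Permutations are in one-line notation. A covering inversion of $w\in S_n$ is a pair of values $(w(i),w(j))$ with $i<j$, $w(i)>w(j)$, and $w(k)<w(j)$ for all $i<k<j$ (equivalently, $i$ is maximal among positions $i<j$ with $w(i)>w(j)$). $\mathrm{CInv}(w)$ is the set of covering inversions of $w$. Removing the covering inversion $(w(i),w(j))$ from $w$ means forming the permutation $w'$ obtained from $w$ by exchanging the values in positions $i$ and $j$. *)

(* Defs.v *)
From mathcomp Require Import all_boot all_fingroup.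
Set Implicit Arguments. Unset Strict Implicit. Unset Printing Implicit Defensive.
Import GroupScope.

(* A permutation w : 'S_n in one-line notation: positions and values are 'I_n,
   w i is the value at position i. *)

Definition is_cinv n (w : 'S_n) (a b : 'I_n) : bool :=
  let i := (w^-1)%g a in
  let j := (w^-1)%g b in
  [&& (i < j)%N, (b < a)%N &
      [forall k : 'I_n, ((i < k)%N && (k < j)%N) ==> (w k < b)%N]].

Definition CInv n (w : 'S_n) : {set 'I_n * 'I_n} :=
  [set p : 'I_n * 'I_n | is_cinv w p.1 p.2].

(* Removing (a, b) = (w(i), w(j)): exchange the values in positions i and j.
   In mathcomp, (s * t) x = t (s x), so (tperm i j * w) k = w (tperm i j k). *)
Definition remove_cinv n (w : 'S_n) (p : 'I_n * 'I_n) : 'S_n :=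
  (tperm ((w^-1)%g p.1) ((w^-1)%g p.2) * w)%g.

(* Main.v *)
Require Import Defs.
From mathcomp Require Import all_boot all_fingroup.
From mathcomp Require Import zify.
Import GroupScope.

Lemma tD {T : finType} {x y z : T} : z != x -> z != y -> tperm x y z = z.
Proof. by move=> a b; apply: tpermD; rewrite eq_sym. Qed.

Lemma key n (w : 'S_n) (i0 j0 i j : 'I_n) :
  (i0 < j0)%N -> (w j0 < w i0)%N -> (forall k : 'I_n, (i0 < k < j0)%N -> (w k < w j0)%N) ->
  (i < j)%N -> (w j < w i)%N -> (forall k : 'I_n, (i < k < j)%N -> (w k < w j)%N) ->
  (w j0 <= w j)%N -> (i, j) != (i0, j0) ->
  [&& (tperm i0 j0 i < tperm i0 j0 j)%N, (w j < w i)%N &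
      [forall k : 'I_n, ((tperm i0 j0 i < k)%N && (k < tperm i0 j0 j)%N) ==> ((tperm i0 j0 * w)%g k < w j)%N]].
Proof.
move=> p1 p2 p3 q1 q2 q3 hmin hne.
have jne : j != j0.
  apply/eqP => ej; subst j; move: hne; case: (ltngtP i i0) => c.
  - by have := q3 i0; rewrite c p1 /= => /(_ isT); lia.
  - by have := p3 i; rewrite c q1 /= => /(_ isT); lia.
  - have ei : i = i0 by apply: val_inj.
    by rewrite ei eqxx.
have ltj : (w j0 < w j)%N.
  rewrite ltn_neqAle hmin andbT; apply/negP => /eqP/val_inj/perm_inj ej.
  by rewrite ej eqxx in jne.
have ine : i != j0 by apply/eqP => ei; subst i; lia.
rewrite q2 /=.
have [ei|nei] := eqVneq i i0.
  subst i; have jni0 : j != i0 by apply/eqP => e; subst j; lia.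
  rewrite tpermL (tD jni0 jne).
  have jj : (j0 < j)%N.
    case: (ltngtP j j0) => c //.
    - by have := p3 j; rewrite c q1 /= => /(_ isT); lia.
    - have ee : j = j0 by apply: val_inj.
      by move: jne; rewrite ee eqxx.
  rewrite jj; apply/forallP => k; apply/implyP => /andP [k1 k2]; rewrite permM.
  rewrite tD; first by apply: q3; rewrite k2 andbT; lia.
  - by apply/eqP => e; subst k; lia.
  - by apply/eqP => e; subst k; lia.
rewrite (tD nei ine).
have [ej|nej] := eqVneq j i0.
  subst j; rewrite tpermL.
  have ij : (i < j0)%N by lia.
  rewrite ij; apply/forallP => k; apply/implyP => /andP [k1 k2]; rewrite permM.
  case: tpermP => [e|e|ne1 ne2]; subst.
  - by [].
  - by rewrite ltnn in k2.
  case: (ltngtP k i0) => c.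
  - by apply: q3; rewrite k1 c.
  - by have := p3 k; rewrite c k2 /= => /(_ isT) h; apply: ltn_trans h p2.
  - have ee : k = i0 by apply: val_inj.
      by case: (ne1 ee).
rewrite (tD nej jne) q1; apply/forallP => k; apply/implyP => /andP [k1 k2]; rewrite permM.
case: tpermP => [e|e|ne1 ne2]; subst.
- by [].
- have ii : (i < i0)%N.
    case: (ltngtP i i0) => c //.
    + by have := p3 i; rewrite c k1 /= => /(_ isT); lia.
    + have ee : i = i0 by apply: val_inj.
      by move: nei; rewrite ee eqxx.
  by apply: q3; rewrite ii /=; lia.
- by apply: q3; rewrite k1 k2.
Qed.

Theorem lemma5p6 (n : nat) (w : 'S_n) (I : {set 'I_n * 'I_n})
    (p : 'I_n * 'I_n) :
  I \subset CInv w ->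
  p \in I ->
  (forall q, q \in I -> (p.2 <= q.2)%N) ->
  I :\ p \subset CInv (remove_cinv w p).
Proof.
move=> sub pI pmin; apply/subsetP => -[c d] /setD1P [qp qI].
have hq := subsetP sub _ qI; have hp := subsetP sub _ pI.
rewrite !inE /= in hq hp.
have hmin := pmin _ qI.
case: p {pI pmin} qp hp hmin => a b qp hp hmin.
rewrite inE /remove_cinv /is_cinv /=.
move: qp hp hmin hq.
rewrite /is_cinv /= -[a](permKV w) -[b](permKV w) -[c](permKV w) -[d](permKV w).
move: (w^-1 a) (w^-1 b) (w^-1 c) (w^-1 d) => i0 j0 i j.
rewrite !permK invMg tpermV !permM !permK.
move=> qp /and3P [p1 p2 /forallP p3] hmin /and3P [q1 q2 /forallP q3].
apply: key => //.
- by move=> k hk; have := implyP (p3 k) hk.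
- by move=> k hk; have := implyP (q3 k) hk.
- by apply: contra qp => /eqP [-> ->].
Qed.
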